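(* Let $K$ be a field, $I\subset R=K[x_1,\ldots,x_n]$ a monomial ideal and $h$ a monomial in $R$. Then $I$ has the copersistence property if and only if $hI$ has the copersistence property.
   Context: An ideal $I$ in a commutative Noetherian ring $R$ has the copersistence property if $\mathrm{Ass}_R(R/I^k)\supseteq\mathrm{Ass}_R(R/I^{k+1})$ for all $k\ge1$. *)

(* Defs.v *)
From HB Require Import structures.
From mathcomp Require Import all_boot all_order all_algebra.
From mathcomp Require Import mpoly.
Set Implicit Arguments. Unset Strict Implicit. Unset Printing Implicit Defensive.
Import GRing.Theory.
Local Open Scope ring_scope.

Section Ideals.
Variables (n : nat) (K : fieldType).
Local Notation R := {mpoly K[n]}.

Definition is_ideal (I : R -> Prop) : Prop :=
  [/\ I 0, (forall f g, I f -> I g -> I (f + g)) & (forall a f, I f -> I (a * f))].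

Definition ideal_gen (S : R -> Prop) : R -> Prop :=
  fun f => exists s : seq (R * R),
    (forall p, p \in s -> S p.2) /\ f = \sum_(p <- s) p.1 * p.2.

Definition is_prime_ideal (P : R -> Prop) : Prop :=
  [/\ is_ideal P, ~ P 1 & (forall a b, P (a * b) -> P a \/ P b)].

Definition is_monomial (h : R) : Prop := exists m : 'X_{1..n}, h = 'X_[m].

Definition is_monomial_ideal (I : R -> Prop) : Prop :=
  exists S : R -> Prop, (forall f, S f -> is_monomial f) /\
    (forall f, I f <-> ideal_gen S f).

Fixpoint ideal_pow (I : R -> Prop) (k : nat) : R -> Prop :=
  match k with
  | 0 => fun _ => True
  | k'.+1 => ideal_gen (fun f => exists a b, ideal_pow I k' a /\ I b /\ f = a * b)
  end.

Definition ideal_mul_elt (h : R) (I : R -> Prop) : R -> Prop :=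
  ideal_gen (fun f => exists g, I g /\ f = h * g).

(* P \in Ass_R(R/J)  iff  P is prime and P = (J : f) = Ann(f + J) for some f *)
Definition Ass (J : R -> Prop) (P : R -> Prop) : Prop :=
  is_prime_ideal P /\ exists f : R, forall g, P g <-> J (g * f).

Definition copersistent (I : R -> Prop) : Prop :=
  forall k, (1 <= k)%N ->
    forall P, Ass (ideal_pow I k.+1) P -> Ass (ideal_pow I k) P.

End Ideals.

(* Main.v *)
Require Import Defs.
From mathcomp Require Import all_boot all_order all_algebra.
From mathcomp Require Import mpoly.
From mathcomp Require Import ring zify.
From Stdlib Require Import FunctionalExtensionality PropExtensionality Classical.
Set Implicit Arguments. Unset Strict Implicit. Unset Printing Implicit Defensive.
Import GRing.Theory.
Local Open Scope ring_scope.


Section S.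
Variables (n : nat) (K : fieldType).
Local Notation R := {mpoly K[n]}.
Implicit Types (S T J A B I P : R -> Prop).

Lemma seteq (A B : R -> Prop) : (forall g, A g <-> B g) -> A = B.
Proof. move=> H; apply: functional_extensionality => g; apply: propositional_extensionality; exact: H. Qed.

Lemma gen_ideal S : is_ideal (ideal_gen S).
Proof.
split.
- by exists [::]; rewrite big_nil.
- move=> f g [s [Hs ->]] [t [Ht ->]]; exists (s ++ t); split; last by rewrite big_cat.
  by move=> p; rewrite mem_cat => /orP [] ?; [apply Hs|apply Ht].
- move=> a f [s [Hs ->]]; exists [seq (a * p.1, p.2) | p <- s]; split.
  + move=> p /mapP [q Hq ->] /=; exact: Hs.
  + by rewrite big_map mulr_sumr; apply eq_bigr => p _; rewrite mulrA.
Qed.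

Lemma gen_in S f : S f -> ideal_gen S f.
Proof.
move=> Hf; exists [:: (1, f)]; split; last by rewrite big_seq1 mul1r.
by move=> p; rewrite inE => /eqP ->.
Qed.

Lemma gen_min S T : is_ideal T -> (forall f, S f -> T f) ->
  forall f, ideal_gen S f -> T f.
Proof.
move=> [T0 TD TM] HST f [s [Hs ->]]; elim: s Hs => [|p s IH] Hs; first by rewrite big_nil.
rewrite big_cons; apply: TD; first by apply: TM; apply: HST; apply: Hs; rewrite inE eqxx.
by apply: IH => q Hq; apply: Hs; rewrite inE Hq orbT.
Qed.

Lemma colonl_ideal T b : is_ideal T -> is_ideal (fun a => T (a * b)).
Proof.
move=> [T0 TD TM]; split; first by rewrite mul0r.
- by move=> f g Hf Hg; rewrite mulrDl; apply: TD.
- by move=> a f Hf; rewrite -mulrA; apply: TM.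
Qed.

Lemma colonr_ideal T a : is_ideal T -> is_ideal (fun b => T (a * b)).
Proof.
move=> [T0 TD TM]; split; first by rewrite mulr0.
- by move=> f g Hf Hg; rewrite mulrDr; apply: TD.
- by move=> c f Hf; rewrite mulrCA; apply: TM.
Qed.

Definition prodset A B : R -> Prop := fun f => exists a b, A a /\ B b /\ f = a * b.
Definition Hset (c : R) J : R -> Prop := fun f => exists j, J j /\ f = c * j.

Lemma pow_S I k : ideal_pow I k.+1 = ideal_gen (prodset (ideal_pow I k) I).
Proof. by []. Qed.

Lemma mul_eltE h I : ideal_mul_elt h I = ideal_gen (Hset h I).
Proof. by []. Qed.

Lemma gen_prod A B : ideal_gen (prodset (ideal_gen A) (ideal_gen B)) = ideal_gen (prodset A B).
Proof.
apply: seteq => g; split.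
- apply: gen_min; first exact: gen_ideal.
  move=> f [a [b [Ha [Hb ->]]]].
  have step1 : forall b, B b -> forall a, ideal_gen A a -> ideal_gen (prodset A B) (a * b).
    move=> b' Hb'; apply: gen_min; first exact: colonl_ideal (gen_ideal _).
    by move=> a' Ha'; apply: gen_in; exists a', b'.
  move: b Hb; apply: gen_min; first exact: colonr_ideal (gen_ideal _).
  by move=> b' Hb'; apply: step1.
- apply: gen_min; first exact: gen_ideal.
  move=> f [a [b [Ha [Hb ->]]]]; apply: gen_in; exists a, b; split; last split=> //; exact: gen_in.
Qed.

Fixpoint Spow S k : R -> Prop :=
  match k with 0 => fun f => f = 1 | k'.+1 => prodset (Spow S k') S end.

Lemma pow_gen S k : ideal_pow (ideal_gen S) k = ideal_gen (Spow S k).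
Proof.
elim: k => [|k IH].
  apply: seteq => g; split=> // _; rewrite -[g]mulr1.
  case: (gen_ideal (fun f : R => f = 1)) => _ _ HM; apply: HM; exact: gen_in.
by rewrite pow_S IH gen_prod.
Qed.

Lemma Hset_ideal c J : is_ideal J -> is_ideal (Hset c J).
Proof.
move=> [T0 TD TM]; split; first by exists 0; rewrite mulr0.
- by move=> f g [j [Hj ->]] [j' [Hj' ->]]; exists (j + j'); rewrite mulrDr; split=> //; apply: TD.
- by move=> a f [j [Hj ->]]; exists (a * j); rewrite mulrCA; split=> //; apply: TM.
Qed.

Lemma gen_Hset_ideal c J : is_ideal J -> ideal_gen (Hset c J) = Hset c J.
Proof.
move=> HJ; apply: seteq => g; split; last exact: gen_in.
by apply: gen_min; first exact: Hset_ideal.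
Qed.

Lemma gen_Hset c S : ideal_gen (Hset c S) = Hset c (ideal_gen S).
Proof.
apply: seteq => g; split.
- apply: gen_min; first exact: Hset_ideal (gen_ideal _).
  by move=> f [j [Hj ->]]; exists j; split=> //; exact: gen_in.
- move=> [j [Hj ->]]; move: j Hj; apply: gen_min; first exact: colonr_ideal (gen_ideal _).
  by move=> j Hj; apply: gen_in; exists j.
Qed.

Lemma prod_Hset c d A B : prodset (Hset c A) (Hset d B) = Hset (c * d) (prodset A B).
Proof.
apply: seteq => g; split.
- move=> [a [b [[a' [Ha' ->]] [[b' [Hb' ->]] ->]]]]; exists (a' * b'); split; last by rewrite mulrACA.
  by exists a', b'.
- move=> [j [[a [b [Ha [Hb ->]]]] ->]]; exists (c * a), (d * b); split; first by exists a.
  by split; [exists b | rewrite mulrACA].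
Qed.

Lemma pow_Hset h I k : is_ideal I -> ideal_pow (Hset h I) k = Hset (h ^+ k) (ideal_pow I k).
Proof.
move=> HI; elim: k => [|k IH].
  by apply: seteq => g; split=> // _; exists g; rewrite expr0 mul1r.
by rewrite pow_S IH prod_Hset -exprSr gen_Hset.
Qed.

Lemma pow_ideal (I : R -> Prop) k : is_ideal (ideal_pow I k).
Proof. by case: k => [|k]; [split | exact: gen_ideal]. Qed.

Lemma pow_dec I k g : ideal_pow I k.+1 g -> ideal_pow I k g.
Proof.
move: g; apply: gen_min; first exact: pow_ideal.
move=> f [a [b [Ha [Hb ->]]]]; rewrite mulrC.
by case: (pow_ideal I k) => _ _ HM; apply: HM.
Qed.

Lemma pow1_sub I g : is_ideal I -> ideal_pow I 1 g -> I g.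
Proof.
move=> HI; rewrite pow_S; move: g; apply: gen_min => //.
move=> f [a [b [Ha [Hb ->]]]].
by case: HI => _ _ HM; apply: HM.
Qed.

Lemma pow_sub I k g : is_ideal I -> (1 <= k)%N -> ideal_pow I k g -> I g.
Proof.
move=> HI; elim: k g => [|k IH] g // _; case: k IH => [|k] IH.
  exact: pow1_sub.
by move/pow_dec; apply: IH.
Qed.

End S.


Section S2.
Variables (n : nat) (K : fieldType).
Local Notation R := {mpoly K[n]}.
Implicit Types (S T J A B I P : R -> Prop) (p q g f : R).

Definition Xe (i : 'I_n) (d : nat) (p : R) : Prop :=
  forall w, w \in msupp p -> (d <= w i)%N.
Definition Xle (i : 'I_n) (d : nat) (p : R) : Prop :=
  forall w, w \in msupp p -> (w i <= d)%N.

Lemma msupp_0 w : w \in msupp (0 : R) = false.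
Proof. by rewrite mcoeff_msupp mcoeff0 eqxx. Qed.

Lemma msupp_1 w : w \in msupp (1 : R) -> w = 0%MM.
Proof. by rewrite mcoeff_msupp mcoeff1; case: (w =P 0%MM) => // _; rewrite eqxx. Qed.

Lemma supp_nil p : (forall w, w \in msupp p -> False) -> p = 0.
Proof.
move=> H; rewrite (mpolyE p); case E: (msupp p) => [|w s]; first by rewrite big_nil.
by case: (H w); rewrite E mem_head.
Qed.

Lemma Xe0 i d : Xe i d 0.
Proof. by move=> w; rewrite msupp_0. Qed.

Lemma XeD i d p q : Xe i d p -> Xe i d q -> Xe i d (p + q).
Proof. by move=> Hp Hq w /msuppD_le; rewrite mem_cat => /orP [] ?; [apply Hp|apply Hq]. Qed.

Lemma XeN i d p : Xe i d p -> Xe i d (- p).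
Proof. by move=> Hp w; rewrite (perm_mem (msuppN p)); apply: Hp. Qed.

Lemma XeM i d e p q : Xe i d p -> Xe i e q -> Xe i (d + e) (p * q).
Proof.
move=> Hp Hq w /msuppM_le /allpairsP [[m1 m2] /= [H1 H2 ->]].
by rewrite mnmDE leq_add // ?Hp ?Hq.
Qed.

Lemma XleM i d e p q : Xle i d p -> Xle i e q -> Xle i (d + e) (p * q).
Proof.
move=> Hp Hq w /msuppM_le /allpairsP [[m1 m2] /= [H1 H2 ->]].
by rewrite mnmDE leq_add // ?Hp ?Hq.
Qed.

Lemma Xe_mono i d d' p : (d <= d')%N -> Xe i d' p -> Xe i d p.
Proof. by move=> le H w /H; apply: leq_trans. Qed.

Lemma min_ex (Q : nat -> Prop) : (exists d, Q d) -> exists d, Q d /\ forall e, Q e -> (d <= e)%N.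
Proof.
move=> [d Qd]; elim: d {-2}d (leqnn d) Qd => [|N IH] d Hd Qd.
  by exists d; split=> // e _; move: Hd; rewrite leqn0 => /eqP ->.
case: (classic (exists e, Q e /\ (e < d)%N)) => [[e [Qe lt]]|no].
  by apply: (IH e) => //; rewrite -ltnS (leq_trans lt).
exists d; split=> // e Qe; rewrite leqNgt; apply/negP => lt; apply: no; by exists e.
Qed.

Lemma low i p : p != 0 -> exists d, Xe i d p /\ ~ Xe i d.+1 p.
Proof.
move=> pnz.
have [d [[w [Hw Ew]] Hmin]] := @min_ex (fun d => exists w, w \in msupp p /\ w i = d)
  (ex_intro _ (mlead p i) (ex_intro _ (mlead p) (conj (mlead_supp pnz) erefl))).
exists d; split.
  by move=> w' Hw'; apply: Hmin; exists w'.
by move=> H; move: (H w Hw); rewrite Ew ltnn.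
Qed.

Lemma supp_sum_mono (r : seq 'X_{1..n}) (P0 : pred 'X_{1..n}) (c : 'X_{1..n} -> K) x :
  x \in msupp (\sum_(w <- r | P0 w) c w *: ('X_[w] : R)) -> (x \in r) && P0 x.
Proof.
elim: r => [|w r IH]; first by rewrite big_nil msupp_0.
rewrite big_cons inE; case Pw: (P0 w).
  move/msuppD_le; rewrite mem_cat => /orP [].
    by move/msuppZ_le; rewrite msuppX mem_seq1 => /eqP ->; rewrite eqxx Pw.
  by move/IH => /andP [-> ->]; rewrite orbT.
by move/IH => /andP [-> ->]; rewrite orbT.
Qed.

Lemma split_low i d p : Xe i d p -> ~ Xe i d.+1 p ->
  exists p0 p1, [/\ p = p0 + p1, p0 != 0, Xe i d p0, Xle i d p0 & Xe i d.+1 p1].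
Proof.
move=> H1 H2.
set p0 := \sum_(w <- msupp p | w i == d) p@_w *: ('X_[w] : R).
set p1 := \sum_(w <- msupp p | w i != d) p@_w *: ('X_[w] : R).
have E : p = p0 + p1 by rewrite {1}(mpolyE p) (bigID (fun w : 'X_{1..n} => w i == d)).
have Hp1 : Xe i d.+1 p1.
  move=> w /supp_sum_mono /andP [Hw Hd]; rewrite ltn_neqAle eq_sym Hd.
  exact: H1.
exists p0, p1; split=> //.
- apply/eqP => p00; apply: H2; by rewrite E p00 add0r.
- by move=> w /supp_sum_mono /andP [Hw /eqP ->].
- by move=> w /supp_sum_mono /andP [Hw /eqP ->].
Qed.

Lemma vmul i d e p q : Xe i d p -> ~ Xe i d.+1 p -> Xe i e q -> ~ Xe i e.+1 q ->
  ~ Xe i (d + e).+1 (p * q).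
Proof.
move=> Hp Hp' Hq Hq' H.
have [p0 [p1 [Ep nz0 Hp0 Lp0 Hp1]]] := split_low Hp Hp'.
have [q0 [q1 [Eq nzq0 Hq0 Lq0 Hq1]]] := split_low Hq Hq'.
have E : p0 * q0 = p * q - (p0 * q1 + p1 * q) by rewrite Ep Eq; ring.
have Hr : Xe i (d + e).+1 (p0 * q1 + p1 * q).
  apply: XeD; first by rewrite -addnS; apply: XeM.
  by rewrite -addSn; apply: XeM.
have H0 : Xe i (d + e).+1 (p0 * q0) by rewrite E; apply: XeD => //; apply: XeN.
have L0 : Xle i (d + e) (p0 * q0) by apply: XleM.
have : p0 * q0 = 0.
  apply: supp_nil => w Hw; move: (H0 w Hw) (L0 w Hw) => a b.
  by move: (leq_trans a b); rewrite ltnn.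
by move/eqP; rewrite mulf_eq0 (negbTE nz0) (negbTE nzq0).
Qed.

Lemma divX t g : (exists q, g = 'X_[t] * q) <-> (forall w, w \in msupp g -> (t <= w)%MM).
Proof.
split.
  move=> [q ->] w; rewrite mulrC (perm_mem (msuppMX q t)) => /mapP [w' _ ->].
  exact: lem_addr.
move=> H; exists (\sum_(w <- msupp g) g@_w *: ('X_[w - t] : R)).
rewrite mulr_sumr {1}(mpolyE g); apply: eq_big_seq => w Hw.
by rewrite -scalerAr -mpolyXD addmC submK // H.
Qed.

Lemma XeX1 i g : Xe i 1 g <-> exists q, g = 'X_[U_(i)] * q.
Proof.
rewrite divX; split=> H w /H.
  by rewrite lep1mP lt0n.
by rewrite lep1mP lt0n.
Qed.

Lemma mpolyX_neq0 m : ('X_[m] : R) != 0.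
Proof. by apply/eqP => /(congr1 (mcoeff m)); rewrite mcoeffX mcoeff0 eqxx => /eqP; rewrite oner_eq0. Qed.

Lemma Xi_prime i : is_prime_ideal (Xe i 1).
Proof.
split.
- split; first exact: Xe0.
  + by move=> f g; apply: XeD.
  + by move=> a f Hf; rewrite -[1%N]add0n; apply: XeM => // w.
- move=> H; have: (0%MM : 'X_{1..n}) \in msupp (1 : R) by rewrite mcoeff_msupp mcoeff1 eqxx oner_eq0.
  by move/H; rewrite mnm0E.
- move=> a b Hab; apply: NNPP => /not_or_and [Ha Hb].
  have anz : a != 0 by apply/eqP => a0; apply: Ha; rewrite a0; exact: Xe0.
  have bnz : b != 0 by apply/eqP => b0; apply: Hb; rewrite b0; exact: Xe0.
  have [d [Hd Hd']] := low i anz; have [e [He He']] := low i bnz.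
  have d0 : d = 0%N by case: d Hd Hd' => // d Hd _; case: Ha; apply: Xe_mono Hd.
  have e0 : e = 0%N by case: e He He' => // e He _; case: Hb; apply: Xe_mono He.
  subst; exact: (vmul Hd Hd' He He' Hab).
Qed.

End S2.


Section S3.
Variables (n : nat) (K : fieldType).
Local Notation R := {mpoly K[n]}.
Implicit Types (S T J A B I P : R -> Prop) (p q g f : R).

Lemma assA (c : R) J P : c != 0 -> Ass J P -> Ass (Hset c J) P.
Proof.
move=> cnz [HP [f Hf]]; split=> //; exists (c * f) => g; rewrite Hf; split.
  by move=> H; exists (g * f); split=> //; rewrite mulrCA.
move=> [j [Hj E]].
suff E2 : g * f = j by rewrite E2.
by apply: (mulfI cnz); rewrite -E mulrCA.
Qed.

Lemma prime_monomial P (m : 'X_{1..n}) : is_prime_ideal P -> P 'X_[m] ->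
  exists i, (0 < m i)%N /\ P 'X_[U_(i)].
Proof.
move=> [_ P1 Pp]; have [N HN] : exists N, (mdeg m <= N)%N by exists (mdeg m).
elim: N m HN => [|N IH] m Hm Pm.
  move: Hm; rewrite leqn0 mdeg_eq0 => /eqP m0; by move: Pm; rewrite m0 mpolyX0 => /P1.
case: (boolP (m == 0%MM)) => [/eqP m0|mnz]; first by move: Pm; rewrite m0 mpolyX0 => /P1.
have [i Hi] : exists i, m i != 0%N.
  apply/existsP; rewrite -negb_forall; apply: contra mnz => /forallP H.
  by apply/eqP/mnmP => j; rewrite mnm0E; apply/eqP/H.
have le : (U_(i) <= m)%MM by rewrite lep1mP.
have : P ('X_[m - U_(i)] * 'X_[U_(i)]) by rewrite -mpolyXD submK.
case/Pp => [Pr|Pi]; last by exists i; rewrite lt0n.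
have [|j [Hj Pj]] := IH (m - U_(i))%MM _ Pr.
  move: Hm; rewrite -{1}(submK le) mdegD mdeg1 addn1 ltnS //.
by exists j; split=> //; move: Hj; rewrite mnmBE => Hj; exact: leq_trans Hj (leq_subr _ _).
Qed.

Lemma assB (m : 'X_{1..n}) J P : Ass (Hset 'X_[m] J) P ->
  Ass J P \/ exists i, (0 < m i)%N /\ P = Xe i 1.
Proof.
move=> [HP [f Hf]]; have [[P0 PD PM] P1 Pp] := HP.
case: (classic (exists a, (exists q, a * f = 'X_[m] * q) /\ ~ P a)) => [[a [[q Eq] Pa]]|no].
  left; split=> //; exists q => g; split.
    move=> Pg; have : P (a * g) by apply: PM.
    move/Hf => [j [Hj E]].
    suff E2 : g * q = j by rewrite E2.
    by apply: (mulfI (@mpolyX_neq0 n K m)); rewrite -E mulrAC Eq; ring.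
  move=> Hgq; have : P (g * a).
    by apply/Hf; exists (g * q); split=> //; rewrite -mulrA Eq mulrCA.
  by case/Pp.
right.
have Hno : forall a, (exists q, a * f = 'X_[m] * q) -> P a.
  by move=> a Ha; apply: NNPP => Pa; apply: no; exists a.
have Pdiv : forall g, P g -> exists q, g * f = 'X_[m] * q.
  by move=> g /Hf [j [_ E]]; exists j.
have Pc : P 'X_[m] by apply: Hno; exists f.
have [i [mi Pi]] := prime_monomial HP Pc.
exists i; split=> //; apply: seteq => g; split; last first.
  by move/XeX1 => [q ->]; rewrite mulrC; apply: PM.
move=> Pg; apply: NNPP => Ng.
have gnz : g != 0 by apply/eqP => g0; apply: Ng; rewrite g0; exact: Xe0.
have fnz : f != 0.
  by apply/eqP => f0; apply: P1; apply: Hno; exists 0; rewrite f0 !mulr0.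
have [d [Hd Hd']] := low i gnz; have [a [Ha Ha']] := low i fnz.
have d0 : d = 0%N by case: d Hd Hd' => // d Hd _; case: Ng; apply: Xe_mono Hd.
subst d; have V := vmul Hd Hd' Ha Ha'.
have [q Eq] := Pdiv g Pg.
have Hgf : Xe i (m i) (g * f).
  have H := proj1 (divX _ _) (ex_intro (fun q0 => g * f = 'X_[m] * q0) q Eq).
  by move=> w /H /mnm_lepP.
have mia : (m i <= a)%N.
  rewrite leqNgt; apply/negP => lt; apply: V; rewrite add0n; exact: Xe_mono Hgf.
have Hfi : Xe i (m i) f by apply: Xe_mono Ha.
have [q' Eq'] := Pdiv _ Pi.
have Hxf := proj1 (divX _ _) (ex_intro (fun q0 => 'X_[U_(i)] * f = 'X_[m] * q0) q' Eq').
apply: P1; apply: Hno; rewrite mul1r; apply/divX => w Hw.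
have : (U_(i) + w)%MM \in msupp ('X_[U_(i)] * f).
  by rewrite mulrC (perm_mem (msuppMX f _)); apply/mapP; exists w.
move/Hxf/mnm_lepP => H; apply/mnm_lepP => j.
case: (eqVneq i j) => [<-|ij]; first exact: Hfi.
by move: (H j); rewrite mnmDE mnm1E (negbTE ij) add0n.
Qed.

Definition monoset S := forall s, S s -> exists t, s = 'X_[t].

Lemma monoM S g : monoset S -> ideal_gen S g ->
  forall w, w \in msupp g -> exists t, S 'X_[t] /\ (t <= w)%MM.
Proof.
move=> HS; move: g; apply: gen_min.
  split.
  - by move=> w; rewrite msupp_0.
  - by move=> f g Hf Hg w /msuppD_le; rewrite mem_cat => /orP [] ?; [apply Hf|apply Hg].
  - move=> a f Hf w /msuppM_le /allpairsP [[m1 m2] /= [H1 H2 ->]].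
    have [t [St le]] := Hf _ H2; exists t; split=> //.
    exact: lepm_trans (lem_addl _ _).
move=> s Ss; have [t Et] := HS s Ss; subst s => w; rewrite msuppX mem_seq1 => /eqP ->.
by exists t; split=> //; exact: lepm_refl.
Qed.

Lemma assNZ L i : Ass L (Xe i 1) -> exists g, L g /\ g != 0.
Proof.
move=> [HP [f Hf]].
have Xi1 : Xe i 1 ('X_[U_(i)] : R).
  by move=> w; rewrite msuppX mem_seq1 => /eqP ->; rewrite mnm1E eqxx.
have := proj1 (Hf _) Xi1 => H.
exists ('X_[U_(i)] * f); split=> //; apply/eqP => E.
have f0 : f = 0 by move/eqP: E; rewrite mulf_eq0 (negbTE (@mpolyX_neq0 n K _)) => /eqP.
have [_ P1 _] := HP; apply: P1; apply/Hf; rewrite f0 mulr0; by rewrite f0 mulr0 in H.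
Qed.

Lemma assC S i : monoset S -> (exists g, ideal_gen S g /\ g != 0) ->
  (forall g, ideal_gen S g -> Xe i 1 g) -> Ass (ideal_gen S) (Xe i 1).
Proof.
move=> HS [g0 [Hg0 g0nz]] Hsub.
have [t [St _]] := monoM HS Hg0 (mlead_supp g0nz).
have [d0 [[u0 [Lu0 Eu0]] Hmin]] := @min_ex (fun d => exists u, ideal_gen S 'X_[u] /\ u i = d)
  (ex_intro _ (t i) (ex_intro _ t (conj (gen_in St) erefl))).
have u0i : (0 < u0 i)%N.
  by apply: (Hsub _ Lu0); rewrite msuppX mem_seq1.
have le : (U_(i) <= u0)%MM by rewrite lep1mP -lt0n.
have [L0 LD LM] := gen_ideal S.
split; first exact: Xi_prime.
exists 'X_[u0 - U_(i)] => g; split.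
  move/XeX1 => [q ->]; rewrite mulrAC -mpolyXD addmC submK //.
  by rewrite mulrC; apply: LM.
move=> Hgf w Hw; rewrite lt0n; apply/negP => /eqP wi0.
have : (u0 - U_(i) + w)%MM \in msupp (g * 'X_[u0 - U_(i)]).
  by rewrite (perm_mem (msuppMX g _)); apply/mapP; exists w.
move=> Hw'; have [t' [St' le']] := monoM HS Hgf Hw'.
have : ideal_gen S 'X_[u0 - U_(i) + w].
  by rewrite -(submK le') mpolyXD; apply: LM; apply: gen_in.
move=> Lw; have := Hmin _ (ex_intro _ _ (conj Lw erefl)).
rewrite mnmDE mnmBE mnm1E eqxx wi0 addn0 Eu0 => H.
by move: H u0i; rewrite Eu0; lia.
Qed.

End S3.


Section S4.
Variables (n : nat) (K : fieldType).
Local Notation R := {mpoly K[n]}.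
Implicit Types (S T J A B I P : R -> Prop) (p q g f : R).

Lemma Spow_mono S k : monoset S -> monoset (Spow S k).
Proof.
move=> HS; elim: k => [|k IH] s /=.
  by move=> ->; exists 0%MM; rewrite mpolyX0.
move=> [a [b [Ha [Hb ->]]]]; have [t1 ->] := IH _ Ha; have [t2 ->] := HS _ Hb.
by exists (t1 + t2)%MM; rewrite mpolyXD.
Qed.

Lemma Hset_mono (m : 'X_{1..n}) S : monoset S -> monoset (Hset 'X_[m] S).
Proof.
move=> HS s [j [Hj ->]]; have [t ->] := HS _ Hj.
by exists (m + t)%MM; rewrite mpolyXD.
Qed.

Theorem main_mono S (m : 'X_{1..n}) : monoset S ->
  (copersistent (ideal_gen S) <-> copersistent (ideal_mul_elt 'X_[m] (ideal_gen S))).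
Proof.
move=> HS; set I := ideal_gen S.
have HI : is_ideal I by exact: gen_ideal.
have EJ k : ideal_pow I k = ideal_gen (Spow S k) by exact: pow_gen.
have EH k : ideal_pow (ideal_mul_elt 'X_[m] I) k = Hset 'X_[m *+ k] (ideal_pow I k).
  by rewrite mul_eltE gen_Hset_ideal // pow_Hset // mpolyXn.
have EHg k : Hset 'X_[m *+ k] (ideal_pow I k) = ideal_gen (Hset 'X_[m *+ k] (Spow S k)).
  by rewrite EJ gen_Hset.
have C1 k i : (1 <= k)%N -> (0 < m i)%N -> (exists j, ideal_pow I k.+1 j /\ j != 0) ->
    Ass (Hset 'X_[m *+ k] (ideal_pow I k)) (Xe i 1).
  move=> Hk mi [j [Hj jnz]]; rewrite EHg; apply: assC.
  - by apply: Hset_mono; apply: Spow_mono.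
  - rewrite -EHg; exists ('X_[m *+ k] * j); split.
      by exists j; split=> //; apply: pow_dec.
    by rewrite mulf_neq0 // mpolyX_neq0.
  - rewrite -EHg => g [j' [_ ->]]; rewrite -[1%N]addn0; apply: XeM => // w.
    rewrite msuppX mem_seq1 => /eqP ->; rewrite mulmnE muln_gt0 mi; lia.
have C2 k i : (1 <= k)%N -> Ass (ideal_pow I k.+1) (Xe i 1) -> Ass (ideal_pow I k) (Xe i 1).
  move=> Hk HA; rewrite EJ; apply: assC.
  - exact: Spow_mono.
  - have [j [Hj jnz]] := assNZ HA; exists j; split=> //; rewrite -EJ; exact: pow_dec.
  - rewrite -EJ => g Hg.
    have Hgg : ideal_pow I k.+1 (g * g).
      by apply: gen_in; exists g, g; split=> //; split=> //; apply: (pow_sub HI Hk).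
    case: HA => [[_ _ Pp] [f Hf]].
    have : Xe i 1 (g * g).
      apply/Hf; rewrite mulrC; case: (pow_ideal I k.+1) => _ _ HM; exact: HM.
    by case/Pp.
split.
- move=> Hc k Hk P; rewrite !EH => HA.
  case: (assB HA) => [HA'|[i [mi EP]]].
    by apply: assA; [exact: mpolyX_neq0 | exact: Hc].
  subst P; apply: C1 => //.
    by move: mi; rewrite mulmnE muln_gt0 => /andP [].
  have [g [[j [Hj ->]] gnz]] := assNZ HA; exists j; split=> //.
  by apply/eqP => j0; move: gnz; rewrite j0 mulr0 eqxx.
- move=> Hc k Hk P HA.
  have HA2 := assA (@mpolyX_neq0 n K (m *+ k.+1)) HA.
  rewrite -EH in HA2; have := Hc k Hk P HA2; rewrite EH => /assB [//|[i [_ EP]]].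
  by subst P; apply: C2.
Qed.

End S4.

Unset Implicit Arguments.
Theorem proposition3p7 (K : fieldType) (n : nat) (I : {mpoly K[n]} -> Prop)
  (h : {mpoly K[n]}) :
  is_monomial_ideal I -> is_monomial h ->
  (copersistent I <-> copersistent (ideal_mul_elt h I)).
Proof.
move=> [S [HS HI]] [m ->].
have -> : I = ideal_gen S by apply: seteq.
exact: main_mono.
Qed.
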